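(* Let $a$ and $b$ be relatively prime integers with $1<a<b$ and $S=\langle a,b\rangle$. Let $i\in\{1,\dots,a-1\}$ with $I_{i,a}(S)\neq\varnothing$ and let $h_i=\min I_{i,a}(S)$. If $n$ is the smallest positive integer such that $h_i+na\in b\mathbb{N}$, then $I_{i,a}(S)=\{h_i,h_i+a,\dots,h_i+(n-1)a\}$.
   Context: $\mathbb{N}$ is the set of nonnegative integers, $b\mathbb{N}=\{bk:k\in\mathbb{N}\}$, and $\langle a,b\rangle=\{\lambda_1a+\lambda_2b:\lambda_1,\lambda_2\in\mathbb{N}\}$. $I(S)$ is the set of isolated gaps of $S$ ($x\in\mathbb{N}\setminus S$ with $x-1,x+1\in S$), and $I_{i,a}(S)=\{s\in I(S):s\equiv i\pmod a\}$. *)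

(* Defs.v *)
From mathcomp Require Import all_boot.

Definition inS (a b x : nat) : Prop := exists l1 l2 : nat, x = l1 * a + l2 * b.

Definition isolated_gap (a b x : nat) : Prop :=
  ~ inS a b x /\ 0 < x /\ inS a b x.-1 /\ inS a b x.+1.

Definition Iia (a b i x : nat) : Prop := isolated_gap a b x /\ x %% a = i.

(* Main.v *)
Require Import Defs.
From mathcomp Require Import all_boot.
From mathcomp Require Import zify.

Theorem lemma4p6 (a b i h n : nat) :
  1 < a -> a < b -> coprime a b ->
  0 < i -> i < a ->
  (* h = min I_{i,a}(S) (in particular I_{i,a}(S) is nonempty) *)
  Iia a b i h -> (forall x, Iia a b i x -> h <= x) ->
  (* n = smallest positive integer with h + n a in bN *)
  0 < n -> b %| h + n * a ->
  (forall m, 0 < m -> m < n -> ~~ (b %| h + m * a)) ->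
  forall x, Iia a b i x <-> exists2 k, k < n & x = h + k * a.
Proof.
move=> a1 ab cop i0 ia [[hS [h0 [hm hp]]] hi] hmin n0 /dvdnP [l hl] hmn x; split.
- move=> Hx; have hx := hmin x Hx; case: Hx => [[xS _] xi].
  have : a %| x - h by rewrite -eqn_mod_dvd // xi hi.
  move/dvdnP => [k hk].
  exists k; last by lia.
  rewrite ltnNge; apply/negP => kn; apply: xS.
  exists (k - n), l; rewrite -hl.
  have -> : x = h + n * a + (k - n) * a by nia.
  by rewrite addnC.
- move=> [k kn ->]; split; last by rewrite addnC modnMDl.
  split.
    move=> [l1 [l2 E]].
    case: (leqP k l1) => kl.
      apply: hS; exists (l1 - k), l2; nia.
    move: (hmn (k - l1)); rewrite subn_gt0 kl => /(_ isT).
    have -> : h + (k - l1) * a = l2 * b by nia.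
    rewrite dvdn_mull // => H; have: k - l1 < n by lia. by move/H.
  split; first lia.
  split.
    case: hm => [u [v E]]; exists (u + k), v.
    have : 0 < h by []. move=> _.
    have -> : (h + k * a).-1 = h.-1 + k * a by lia.
    rewrite E; nia.
  case: hp => [u [v E]]; exists (u + k), v.
  have -> : (h + k * a).+1 = h.+1 + k * a by lia.
  rewrite E; nia.
Qed.
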